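(* Let $k\geq 1$. (i) Let $q$ be a prime power and $E\subset\mathbb{F}_q^2$. Then $E^{k+1}$ contains $\lesssim q^k|E|$ bad tuples. In particular, if $|E|\gtrsim q^{1+\varepsilon}$ for some constant $\varepsilon>0$, the number of bad tuples in $E^{k+1}$ is $o(|E|^{k+1})$. (ii) Let $p$ be a prime, $\ell\geq 1$, $R=\mathbb{Z}/p^\ell\mathbb{Z}$. The number of bad tuples in $(R^2)^{k+1}$ is $\lesssim p^{(2\ell-1)(k+1)+1}$. In particular, if $E\subset R^2$ satisfies $|E|\gtrsim p^{2\ell-1+\frac{1}{k+1}+\varepsilon}$ for some constant $\varepsilon>0$, then the number of bad tuples in $E^{k+1}$ is $o(|E|^{k+1})$.
   Context: For a commutative ring $R$ and $x=(x_1,x_2),y=(y_1,y_2)\in R^2$, write $y^\perp=(y_2,-y_1)$, so $x\cdot y^\perp=x_1y_2-x_2y_1$. A tuple (configuration) $x=(x^1,\dots,x^{k+1})\in(R^2)^{k+1}$ is good if there exist indices $i,j$ with $x^i\cdot x^{j\perp}$ a unit of $R$, and bad otherwise. $X\lesssim Y$ means $X\leq CY$ with $C$ independent of $q$ (resp. $p,\ell$) and $E$; $o(Y)$ denotes a quantity whose ratio to $Y$ tends to $0$ as the ring size tends to infinity. *)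

(* Defs.v *)
From Stdlib Require Import Reals.
From HB Require Import structures.
From mathcomp Require Import all_boot all_order all_algebra.
Set Implicit Arguments. Unset Strict Implicit. Unset Printing Implicit Defensive.
Import GRing.Theory.

Local Open Scope ring_scope.

Definition dotperp (R : comUnitRingType) (x y : R * R) : R :=
  x.1 * y.2 - x.2 * y.1.

Definition good (R : comUnitRingType) (k : nat) (x : 'I_k.+1 -> R * R) : Prop :=
  exists i j : 'I_k.+1, dotperp (x i) (x j) \is a GRing.unit.

Definition goodb (R : finComUnitRingType) (k : nat) (x : {ffun 'I_k.+1 -> R * R}) : bool :=
  [exists i : 'I_k.+1, exists j : 'I_k.+1, dotperp (x i) (x j) \is a GRing.unit].

Lemma goodbP (R : finComUnitRingType) (k : nat) (x : {ffun 'I_k.+1 -> R * R}) :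
  reflect (good x) (goodb x).
Proof.
apply: (iffP existsP) => [[i /existsP [j h]]|[i [j h]]]; first by exists i, j.
by exists i; apply/existsP; exists j.
Qed.

Definition nbad (R : finComUnitRingType) (k : nat) (E : {set R * R}) : nat :=
  #|[set x : {ffun 'I_k.+1 -> R * R} | [forall i, x i \in E] && ~~ goodb x]|.

(* Main.v *)
Require Import Defs.
From Stdlib Require Import Reals Lra ZArith.
From HB Require Import structures.
From mathcomp Require Import all_boot all_order all_algebra.
From mathcomp Require Import zify.
Set Implicit Arguments. Unset Strict Implicit. Unset Printing Implicit Defensive.
Import GRing.Theory.
Local Open Scope ring_scope.

Lemma line_lemma (K : fieldType) n (v : 'I_n.+1 -> K * K) :
  (forall i j, dotperp (v i) (v j) = 0) ->
  exists i, forall j, exists t, v j = (t * (v i).1, t * (v i).2).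
Proof.
move=> h.
case: (pickP (fun i => v i != (0,0))) => [i Hi | H0]; last first.
  exists ord0 => j; exists 0; rewrite !mul0r.
  by have := H0 j => /negbFE/eqP.
exists i => j; have := h i j; rewrite /dotperp.
case: (v i) Hi => a b /= Hab; case: (v j) => y1 y2 /= /eqP; rewrite subr_eq0 => /eqP e.
have [a0|anz] := eqVneq a 0.
  have bnz : b != 0 by move: Hab; rewrite a0; apply: contraNneq => ->.
  exists (y2 / b); move: e; rewrite a0 mul0r => /esym/eqP; rewrite mulf_eq0 (negbTE bnz) /= => /eqP ->.
  by rewrite mulr0 divfK.
exists (y1 / a); rewrite divfK //; congr (_, _).
by rewrite -[y2](mulKf anz) e mulrAC [RHS]mulrC [b * y1]mulrC.
Qed.

Lemma bad_zero (F : finFieldType) k (x : {ffun 'I_k.+1 -> F * F}) :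
  ~~ goodb x -> forall i j, dotperp (x i) (x j) = 0.
Proof.
move=> /goodbP nb i j; apply/eqP; case: eqP => // /eqP nz; exfalso; apply: nb.
by exists i, j; rewrite unitfE.
Qed.

Lemma nbad_field (F : finFieldType) k (E : {set F * F}) :
  (nbad k E <= k.+1 * #|F| ^ k * #|E|)%N.
Proof.
pose g := fun u : 'I_k.+1 * (F * F) * {ffun 'I_k -> F} =>
  [ffun j => match unlift u.1.1 j with
             | Some j' => (u.2 j' * u.1.2.1, u.2 j' * u.1.2.2)
             | None => u.1.2 end].
have sub : [set x : {ffun 'I_k.+1 -> F * F} | [forall i, x i \in E] && ~~ goodb x]
   \subset g @: setX (setX setT E) setT.
  apply/subsetP => x; rewrite inE => /andP[/forallP xE nb].
  have [i hi] := line_lemma (bad_zero nb).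
  have [t ht] := fin_all_exists (fun j' : 'I_k => hi (lift i j')).
  apply/imsetP; exists (i, x i, [ffun j' => t j']); first by rewrite !inE xE.
  apply/ffunP => j; rewrite !ffunE /=.
  by case: unliftP => [j' ->|->] //; rewrite ffunE.
rewrite /nbad (leq_trans (subset_leq_card sub)) // (leq_trans (leq_imset_card _ _)) //.
by rewrite !cardsX !cardsT card_ord card_ffun card_ord mulnAC.
Qed.
Section Red.
Variables (p l : nat) (pp : prime p) (l1 : (1 <= l)%N).
Let n := (p ^ l)%N.
Lemma n_gt1 : (1 < n)%N.
Proof. by rewrite /n -(expn0 p) ltn_exp2l ?prime_gt1. Qed.
Definition red (a : 'Z_n) : 'F_p := (val a)%:R.
Lemma red_nat m : red (m%:R) = m%:R.
Proof.
rewrite /red /=; rewrite val_Zp_nat ?n_gt1 // -(Fp_nat_mod pp) modn_dvdm ?Fp_nat_mod //.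
by rewrite /n -{1}(expn1 p) dvdn_exp2l.
Qed.
Lemma natr_val (a : 'Z_n) : (val a)%:R = a.
Proof. exact: natr_Zp. Qed.
Lemma redD a b : red (a + b) = red a + red b.
Proof. by rewrite -{1}(natr_val a) -{1}(natr_val b) -natrD red_nat natrD. Qed.
Lemma redM a b : red (a * b) = red a * red b.
Proof. by rewrite -{1}(natr_val a) -{1}(natr_val b) -natrM red_nat natrM. Qed.
Lemma redN a : red (- a) = - red a.
Proof.
apply/eqP; rewrite -subr_eq0 opprK -redD addNr.
by rewrite -(natr_val 0) red_nat.
Qed.
Lemma redB a b : red (a - b) = red a - red b.
Proof. by rewrite redD redN. Qed.
Lemma unit_red a : (a \is a GRing.unit) = (red a != 0).
Proof.
rewrite -{1}(natr_val a) unitZpE ?n_gt1 // /n coprime_pexpl // prime_coprime //.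
by rewrite /red (dvdn_pcharf (pchar_Fp pp)).
Qed.
Lemma red_Fp (s : 'F_p) : red ((val s)%:R) = s.
Proof. by rewrite red_nat natr_Zp. Qed.
Lemma lift_red (y e : 'Z_n) (s : 'F_p) : red y = s * red e ->
  exists w : 'I_(p ^ (l - 1)), y = (val s)%:R * e + (p * w)%N%:R.
Proof.
move=> h; pose z := y - (val s)%:R * e.
have hd : (p %| val z)%N.
  rewrite (dvdn_pcharf (pchar_Fp pp)); apply/eqP.
  by rewrite -/(red z) /z redB redM red_Fp h subrr.
have lt : (val z %/ p < p ^ (l - 1))%N.
  rewrite ltn_divLR ?prime_gt0 // -expnSr subn1 prednK //.
  by apply: leq_trans (ltn_ord z) _; rewrite Zp_cast ?n_gt1.
exists (Ordinal lt); rewrite /= mulnC (divnK hd) natr_val /z.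
by rewrite addrC subrK.
Qed.
End Red.

Lemma nbad_Zp k p l : prime p -> (1 <= l)%N ->
  (nbad k [set: 'Z_(p ^ l) * 'Z_(p ^ l)] <= k.+1 * p ^ ((2 * l - 1) * k.+1 + 1))%N.
Proof.
move=> pp l1.
pose n := (p ^ l)%N; pose m := (p ^ (l - 1))%N.
pose g := fun u : 'I_k.+1 * ('Z_n * 'Z_n) * {ffun 'I_k -> 'F_p * ('I_m * 'I_m)} =>
  [ffun j => match unlift u.1.1 j with
             | Some j' => ((val (u.2 j').1)%:R * u.1.2.1 + (p * (u.2 j').2.1)%N%:R,
                          (val (u.2 j').1)%:R * u.1.2.2 + (p * (u.2 j').2.2)%N%:R)
             | None => u.1.2 end].
have sub : [set x : {ffun 'I_k.+1 -> 'Z_n * 'Z_n} | [forall i, x i \in [set: 'Z_n * 'Z_n]] && ~~ goodb x]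
   \subset g @: setT.
  apply/subsetP => x; rewrite inE => /andP[_ /goodbP nb].
  pose rv := fun v : 'Z_n * 'Z_n => (@red p l v.1, @red p l v.2).
  have hz : forall i j, dotperp (rv (x i)) (rv (x j)) = 0.
    move=> i j; apply/eqP; case: eqP => // /eqP nz; exfalso; apply: nb.
    exists i, j; rewrite unit_red //.
    by rewrite /dotperp redB ?redM.
  have [i hi] := line_lemma hz.
  have hj : forall j' : 'I_k, exists u : 'F_p * ('I_m * 'I_m),
     x (lift i j') = ((val u.1)%:R * (x i).1 + (p * u.2.1)%N%:R,
                      (val u.1)%:R * (x i).2 + (p * u.2.2)%N%:R).
    move=> j'; have [t] := hi (lift i j'); rewrite /rv.
    case: (x (lift i j')) => y1 y2 [e1 e2].
    have [w1 ->] := lift_red pp l1 e1.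
    have [w2 ->] := lift_red pp l1 e2.
    by exists (t, (w1, w2)).
  have [u hu] := fin_all_exists hj.
  apply/imsetP; exists (i, x i, [ffun j' => u j']); first by rewrite inE.
  apply/ffunP => j; rewrite !ffunE /=.
  by case: unliftP => [j' ->|->] //; rewrite ffunE hu.
rewrite /nbad (leq_trans (subset_leq_card sub)) // (leq_trans (leq_imset_card _ _)) //.
rewrite cardsT !card_prod card_ffun !card_prod !card_ord (Fp_cast pp) Zp_cast; last first.
  by rewrite -(expn0 p) ltn_exp2l ?prime_gt1.
rewrite -mulnA leq_mul2l; apply/orP; right.
have -> : n = (p * m)%N by rewrite /n /m -expnS subn1 prednK.
rewrite /m -!expnS -!expnD -?expnS -expnM -expnD; apply: eq_leq; congr (p ^ _)%N.
nia.
Qed.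
Section RealPart.
Local Open Scope R_scope.

Lemma nat_above (A : R) : exists N : nat, (1 <= N)%nat /\ A < INR N.
Proof.
destruct (archimed (Rmax A 1)) as [H _].
exists (Z.to_nat (up (Rmax A 1))).
have hA := Rmax_l A 1; have h1 := Rmax_r A 1.
have hz : Z.le 0 (up (Rmax A 1)) by apply: le_IZR; lra.
have e : INR (Z.to_nat (up (Rmax A 1))) = IZR (up (Rmax A 1)) by rewrite INR_IZR_INZ Z2Nat.id.
rewrite e; split; last lra.
apply/leP; apply/INR_le; rewrite e /=; lra.
Qed.

Lemma asym (eps c delta K : R) (m : nat) : 0 < eps -> 0 < c -> 0 < delta -> (1 <= m)%nat ->
  exists N : nat, (1 <= N)%nat /\ forall x : R, INR N <= x -> K <= delta * (c * Rpower x eps) ^ m.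
Proof.
move=> he hc hd hm.
set M := Rmax 1 (K / delta).
have hM1 : 1 <= M by apply: Rmax_l.
have hMK : K / delta <= M by apply: Rmax_r.
set A := Rpower (M / c) (/ eps).
have [N [N1 hN]] := nat_above A.
exists N; split => // x hx.
have hA : 0 < A by rewrite /A /Rpower; apply: exp_pos.
have hMc : 0 < M / c by apply: Rdiv_lt_0_compat; lra.
have h1 : M / c <= Rpower x eps.
  have -> : M / c = Rpower A eps.
    by rewrite /A Rpower_mult Rinv_l ?Rpower_1 //; lra.
  apply: Rle_Rpower_l; lra.
have h2 : M <= c * Rpower x eps.
  have -> : M = c * (M / c) by field; lra.
  apply: Rmult_le_compat_l; lra.
have h3 : M <= M ^ m.
  rewrite -{1}(pow_1 M); by apply: Rle_pow => //; apply/leP.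
have h4 : M ^ m <= (c * Rpower x eps) ^ m by apply: pow_incr; split; lra.
have h5 : K <= delta * M.
  have -> : K = delta * (K / delta) by field; lra.
  apply: Rmult_le_compat_l; lra.
have : delta * M <= delta * (c * Rpower x eps) ^ m by apply: Rmult_le_compat_l; lra.
lra.
Qed.

End RealPart.

Section RealMain.
Local Open Scope R_scope.

Lemma INR_muln m n : INR (m * n)%N = INR m * INR n.
Proof. by rewrite -multE mult_INR. Qed.
Lemma INR_expn m n : INR (m ^ n)%N = INR m ^ n.
Proof. elim: n => [|n IH]; first by rewrite expn0. by rewrite expnS INR_muln IH. Qed.
Lemma powD x m n : x ^ (m + n)%N = x ^ m * x ^ n.
Proof. by rewrite -plusE pow_add. Qed.
Lemma powM x m n : x ^ (m * n)%N = (x ^ m) ^ n.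
Proof. by rewrite -multE pow_mult. Qed.

Lemma part1_asym k (hk : (1 <= k)%N) (eps c delta : R) : 0 < eps -> 0 < c -> 0 < delta ->
     exists N : nat, forall (F : finFieldType) (E : {set F * F}),
       (N <= #|F|)%N ->
       c * Rpower (INR #|F|) (1 + eps) <= INR #|E| ->
       INR (nbad k E) <= delta * (INR #|E|) ^ k.+1.
Proof.
move=> he hc hd.
have [N [N1 hN]] := asym (INR k.+1) he hc hd hk.
exists N => F E hNq hE.
set q := INR #|F|; set e := INR #|E|.
have hq : 0 < q.
  rewrite /q; apply: lt_0_INR; apply/ltP; exact: leq_trans N1 hNq.
have hK : INR k.+1 <= delta * (c * Rpower q eps) ^ k by apply: hN; apply: le_INR; apply/leP.
have hb : INR (nbad k E) <= INR k.+1 * q ^ k * e.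
  rewrite /q /e -INR_expn -!INR_muln; apply: le_INR; apply/leP; exact: nbad_field.
rewrite Rpower_plus Rpower_1 // in hE.
have hpe : 0 < Rpower q eps by apply: exp_pos.
have h0 : 0 <= c * Rpower q eps * q.
  apply: Rmult_le_pos; last lra; apply: Rmult_le_pos; lra.
have hE2 : c * Rpower q eps * q <= e.
  by have -> : c * Rpower q eps * q = c * (q * Rpower q eps) by ring.
have hE' : (c * Rpower q eps * q) ^ k <= e ^ k by apply: pow_incr; split; lra.

have hqk : 0 <= q ^ k by apply: pow_le; lra.
have he0 : 0 <= e by apply: pos_INR.
have hB : 0 <= (c * Rpower q eps) ^ k by apply: pow_le; apply: Rmult_le_pos; lra.
apply: Rle_trans hb _.
have s1 : INR k.+1 * q ^ k * e <= delta * (c * Rpower q eps) ^ k * q ^ k * e.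
  apply: Rmult_le_compat_r => //; apply: Rmult_le_compat_r => //.
have s2 : delta * (c * Rpower q eps) ^ k * q ^ k * e <= delta * e ^ k * e.
  apply: Rmult_le_compat_r => //; rewrite Rmult_assoc; apply: Rmult_le_compat_l; first lra.
  by rewrite -Rpow_mult_distr.
apply: Rle_trans s1 _; apply: Rle_trans s2 _.
rewrite /= ; lra.
Qed.

End RealMain.

Section RealMain2.
Local Open Scope R_scope.

Lemma nbad_mono k (R : finComUnitRingType) (E E' : {set R * R}) :
  E \subset E' -> (nbad k E <= nbad k E')%N.
Proof.
move=> sEE; apply: subset_leq_card; apply/subsetP => x; rewrite !inE => /andP[/forallP h ->].
rewrite andbT; apply/forallP => i; exact: (subsetP sEE _ (h i)).
Qed.

Lemma part2_asym k (hk : (1 <= k)%N) (eps c delta : R) : 0 < eps -> 0 < c -> 0 < delta ->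
     exists N : nat, forall (p l : nat) (E : {set 'Z_(p ^ l) * 'Z_(p ^ l)}),
       prime p -> (1 <= l)%N -> (N <= p)%N ->
       c * Rpower (INR p) (INR (2 * l - 1)%N + / INR k.+1 + eps) <= INR #|E| ->
       INR (nbad k E) <= delta * (INR #|E|) ^ k.+1.
Proof.
move=> he hc hd.
have [N [N1 hN]] := asym (INR k.+1) he hc hd (ltn0Sn k).
exists N => p l E pp l1 hNp hE.
set P := INR p; set e := INR #|E|; set a := (2 * l - 1)%N.
have hP : 0 < P by rewrite /P; apply: lt_0_INR; apply/ltP; exact: prime_gt0.
have hK : INR k.+1 <= delta * (c * Rpower P eps) ^ k.+1 by apply: hN; apply: le_INR; apply/leP.
have hb : INR (nbad k E) <= INR k.+1 * (P ^ (a * k.+1 + 1)).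
  rewrite /P -INR_expn -!INR_muln; apply: le_INR; apply/leP.
  exact: leq_trans (nbad_mono k (subsetT E)) (nbad_Zp k pp l1).
rewrite powD pow_1 in hb.
have hk0 : 0 < INR k.+1 by apply: lt_0_INR; apply/ltP.
have hr : Rpower (Rpower P (/ INR k.+1)) (INR k.+1) = P.
  by rewrite Rpower_mult Rinv_l ?Rpower_1 //; lra.
rewrite !Rpower_plus -/P Rpower_pow // in hE.
set B := c * Rpower P eps.
have hpe : 0 < Rpower P eps by apply: exp_pos.
have hB : 0 <= B by rewrite /B; apply: Rmult_le_pos; lra.
set T := Rpower P (/ INR k.+1).
have hT : 0 < T by apply: exp_pos.
have hT1 : T ^ k.+1 = P by rewrite -Rpower_pow // hr.
have hPa : 0 <= P ^ a by apply: pow_le; lra.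
have hE2 : B * P ^ a * T <= e.
  by have -> : B * P ^ a * T = c * (P ^ a * T * Rpower P eps) by rewrite /B; ring.
have hE3 : (B * P ^ a * T) ^ k.+1 <= e ^ k.+1.
  apply: pow_incr; split => //; apply: Rmult_le_pos; [apply: Rmult_le_pos|]; lra.
rewrite !Rpow_mult_distr -powM hT1 in hE3.
apply: Rle_trans hb _.
have hX : 0 <= P ^ (a * k.+1) * P by apply: Rmult_le_pos; [apply: pow_le|]; lra.
apply: Rle_trans (Rmult_le_compat_r _ _ _ hX hK) _.
rewrite Rmult_assoc; apply: Rmult_le_compat_l; first lra.
by rewrite -Rmult_assoc Rpow_mult_distr.
Qed.

End RealMain2.

Theorem lemma2p5 (k : nat) (hk : (1 <= k)%N) :
  (* (i) bound over finite fields F_q, q = #|F| *)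
  (exists C : nat, forall (F : finFieldType) (E : {set F * F}),
      (nbad k E <= C * #|F| ^ k * #|E|)%N)
  /\
  (* (i) in particular: |E| >= c q^(1+eps) implies nbad = o(|E|^(k+1)) as q -> oo *)
  (forall eps c delta : R, Rlt 0 eps -> Rlt 0 c -> Rlt 0 delta ->
     exists N : nat, forall (F : finFieldType) (E : {set F * F}),
       (N <= #|F|)%N ->
       Rle (Rmult c (Rpower (INR #|F|) (Rplus 1 eps))) (INR #|E|) ->
       Rle (INR (nbad k E)) (Rmult delta (pow (INR #|E|) k.+1)))
  /\
  (* (ii) bound over Z/p^l Z *)
  (exists C : nat, forall p l : nat, prime p -> (1 <= l)%N ->
      (nbad k [set: 'Z_(p ^ l) * 'Z_(p ^ l)]
         <= C * p ^ ((2 * l - 1) * k.+1 + 1))%N)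
  /\
  (* (ii) in particular: |E| >= c p^(2l-1+1/(k+1)+eps) implies nbad = o(|E|^(k+1)) as p -> oo *)
  (forall eps c delta : R, Rlt 0 eps -> Rlt 0 c -> Rlt 0 delta ->
     exists N : nat, forall (p l : nat) (E : {set 'Z_(p ^ l) * 'Z_(p ^ l)}),
       prime p -> (1 <= l)%N -> (N <= p)%N ->
       Rle (Rmult c (Rpower (INR p) (Rplus (Rplus (INR (2 * l - 1)) (Rinv (INR k.+1))) eps))) (INR #|E|) ->
       Rle (INR (nbad k E)) (Rmult delta (pow (INR #|E|) k.+1))).
Proof.
split; first by exists k.+1 => F E; apply: nbad_field.
split; first by move=> eps c delta he hc hd; apply: part1_asym.
split; first by exists k.+1 => p l pp l1; apply: nbad_Zp.
by move=> eps c delta he hc hd; apply: part2_asym.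
Qed.
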